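(* Let $m \geq 1$ be an integer and let $q \in (m, m+1)$ be a Pisot number. Then $q$ has no non-real Galois conjugate $q'$ with $|q'| < \frac{1}{m+1/2}$, and $q$ has at most one real Galois conjugate $q'$ with $|q'| < \frac{1}{m+1/2}$.
   Context: A Pisot number is a real algebraic integer $q>1$ all of whose other Galois conjugates have absolute value strictly less than $1$. *)

(* Defs.v *)
From mathcomp Require Import all_boot all_order all_algebra all_field.
Set Implicit Arguments. Unset Strict Implicit. Unset Printing Implicit Defensive.
Import Order.TTheory GRing.Theory Num.Theory.
Local Open Scope ring_scope.

(* Algebraic numbers are modelled in algC (algebraic closure of Q, with
   conjugation/norm).  y is a Galois conjugate of x iff y is a root of the
   minimal polynomial of x over Q (minCpoly x). *)
Definition galois_conjugate (x y : algC) : Prop := root (minCpoly x) y.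

Definition pisot (q : algC) : Prop :=
  [/\ q \is Num.real, 1 < q, q \in Aint &
      forall q' : algC, galois_conjugate q q' -> q' != q -> `|q'| < 1].

(* Main.v *)
Require Import Defs.

From mathcomp Require Import all_boot all_order all_algebra all_field.
From mathcomp Require Import zify ring.
Import Order.TTheory GRing.Theory Num.Theory.
Local Open Scope ring_scope.

Lemma minC_int x : x \in Aint -> forall i, (minCpoly x)`_i \in Num.int.
Proof. by move=> Ax; apply/polyOverP. Qed.

Lemma minC_conj x z : x \in Aint -> root (minCpoly x) z -> root (minCpoly x) z^*.
Proof.
move=> Ax rz.
have -> : minCpoly x = map_poly (@Num.conj algC) (minCpoly x).
  apply/polyP => i; rewrite coef_map /=.
  by rewrite conj_intr ?minC_int.
exact: rmorph_root.
Qed.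

Lemma minC_simple x (rs : seq algC) :
  minCpoly x = \prod_(z <- rs) ('X - z%:P) -> x \in rs -> x \notin rem x rs.
Proof.
move=> Dp xrs; apply/negP => xrs2.
have [p0 [Dp0 mon] minp] := minCpolyP x.
have H : root (minCpoly x)^`() x.
  rewrite Dp (big_rem x xrs) /= (big_rem x xrs2) /=.
  rewrite mulrA derivM /root hornerD !hornerM derivM hornerD !hornerM.
  by rewrite !derivXsubC !hornerXsubC subrr !(mul0r, mulr0, add0r, addr0, mul1r, hornerC).
move: H; rewrite Dp0 deriv_map minp => dv.
have p0nz : p0 != 0 by apply: monic_neq0.
have sz : (1 < size p0)%N.
  by have := size_minCpoly x; rewrite Dp0 size_map_poly.
have d0 : p0^`() != 0.
  apply/eqP => H0; move: (congr1 (fun p : {poly rat} => p`_((size p0).-2)) H0).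
  rewrite coef_deriv coef0 /=.
  have -> : ((size p0).-2.+1 = (size p0).-1)%N by lia.
  move/eqP; rewrite -mulr_natr mulf_eq0 pnatr_eq0 -lead_coefE.
  by rewrite (monicP mon) oner_eq0 /=; move/eqP; move: sz; case: (size p0) => [|[|n]].
by have := lt_size_deriv p0nz; rewrite ltnNge (dvdp_leq d0 dv).
Qed.

Lemma minC_coef0_neq0 x : x != 0 -> (minCpoly x)`_0 != 0.
Proof.
move=> x0; have [p0 [Dp0 mon] minp] := minCpolyP x.
have p0nz : p0 != 0 by apply: monic_neq0.
apply/eqP => c0.
have r0 : root p0 0.
  have : root (map_poly ratr p0 : {poly algC}) (ratr 0).
    by rewrite rmorph0 -Dp0 /root horner_coef0 c0.
  by rewrite fmorph_root.
have [p1 Dp1] := factor_theorem _ _ r0.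
rewrite subr0 in Dp1.
have p1nz : p1 != 0 by apply: contra p0nz => /eqP p10; rewrite Dp1 p10 mul0r.
have : root (map_poly ratr p1 : {poly algC}) x.
  have := root_minCpoly x; rewrite Dp0 Dp1 rmorphM /= map_polyX /root hornerMX.
  by rewrite mulf_eq0 (negbTE x0) orbF.
rewrite minp => /(dvdp_leq p1nz).
by rewrite Dp1 size_mulX // ltnn.
Qed.

Lemma key q a b : pisot q -> root (minCpoly q) a -> root (minCpoly q) b ->
  a != q -> b != q -> a != b -> 1 <= `|q| * `|a| * `|b|.
Proof.
case=> qR q1 qA qconj ra rb aq bq ab.
have [rs Dp] := closed_field_poly_normal (minCpoly q).
rewrite (monicP (minCpoly_monic q)) scale1r in Dp.
have mem z : root (minCpoly q) z = (z \in rs) by rewrite Dp root_prod_XsubC.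
have qrs : q \in rs by rewrite -mem root_minCpoly.
have ars : a \in rs by rewrite -mem.
have brs : b \in rs by rewrite -mem.
have a1 : a \in rem q rs by apply: rem_mem.
have b1 : b \in rem a (rem q rs) by apply: rem_mem; [rewrite eq_sym | apply: rem_mem].
have qn : q \notin rem q rs by apply: minC_simple.
have q0 : q != 0 by apply: contraTneq q1 => ->; rewrite ltr10.
have c1 : 1 <= `|(minCpoly q)`_0|.
  apply: norm_intr_ge1; [exact: minC_int | exact: minC_coef0_neq0].
have : `|(minCpoly q)`_0| = \prod_(z <- rs) `|z|.
  rewrite -horner_coef0 {1}Dp horner_prod normr_prod; apply: eq_bigr => z _.
  by rewrite hornerXsubC sub0r normrN.
move=> E; rewrite E (big_rem q qrs) /= (big_rem a a1) /= (big_rem b b1) /= in c1.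
set X := \prod_(_ <- _) _ in c1.
have X1 : X <= 1.
  rewrite /X big_seq; apply: prodr_ile1 => z zin.
  have z1 := @mem_rem _ _ _ _ zin.
  have z2 := @mem_rem _ _ _ _ z1.
  rewrite normr_ge0 /=; apply: ltW; apply: qconj.
    by rewrite /galois_conjugate mem; apply: (@mem_rem _ _ _ _ z2).
  by apply: contraNneq qn => zq; rewrite zq in z2.
apply: (le_trans c1); rewrite -!mulrA; apply: ler_wpM2l => //.
apply: ler_wpM2l => //; apply: ler_piMr => //.
Qed.

Theorem theorem2p1 (m : nat) (q : algC) :
  (1 <= m)%N -> pisot q -> m%:R < q -> q < m.+1%:R ->
  (forall q' : algC, galois_conjugate q q' -> q' \isn't Num.real ->
     ~ (`|q'| < (m%:R + 2^-1)^-1)) /\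
  (forall q1 q2 : algC, galois_conjugate q q1 -> galois_conjugate q q2 ->
     q1 \is Num.real -> q2 \is Num.real ->
     `|q1| < (m%:R + 2^-1)^-1 -> `|q2| < (m%:R + 2^-1)^-1 -> q1 = q2).
Proof.
move=> m1 pq qm qm1.
have [qR q1 qA _] := pq.
set c : algC := m%:R + 2^-1.
have c1 : 1 < c.
  rewrite /c; apply: (@le_lt_trans _ _ (m%:R)); first by rewrite ler1n.
  by rewrite ltrDl invr_gt0 ltr0n.
have c0 : 0 < c by apply: lt_trans c1.
have r1 : c^-1 < 1 by rewrite invf_lt1.
have r0 : 0 < c^-1 by rewrite invr_gt0.
have q0 : 0 < q by apply: lt_trans q1.
have cc : (m.+1)%:R <= c * c.
  rewrite -(@ler_pM2l _ 4%:R) ?ltr0n //.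
  have -> : (4%:R * (c * c) : algC) = (c * 2%:R) * (c * 2%:R) by ring.
  have -> : c * 2%:R = (m.*2.+1)%:R.
    by rewrite /c mulrDl mulVf ?pnatr_eq0 // -natrM muln2 -addn1 natrD.
  by rewrite -!natrM ler_nat; nia.
have bound (a b : algC) : `|a| < c^-1 -> `|b| < c^-1 -> `|q| * `|a| * `|b| < 1.
  move=> ha hb; rewrite ger0_norm ?ltW //.
  have h1 : q * `|a| * `|b| < (m.+1)%:R * c^-1 * c^-1.
    apply: ltr_pM => //; first by rewrite mulr_ge0 // ltW.
    by apply: ltr_pM => //; apply: ltW.
  apply: (lt_le_trans h1); rewrite -mulrA -invfM ler_pdivrMr ?mul1r //.
  exact: mulr_gt0.
have neq (z : algC) : `|z| < c^-1 -> z != q.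
  move=> h; apply/eqP => zq; move: h; rewrite zq ger0_norm ?ltW // => h.
  by have := lt_trans (lt_trans h r1) q1; rewrite ltxx.
split.
  move=> q' rq' nr lt.
  have rb := @minC_conj _ _ qA rq'.
  have ab : q' != q'^* by rewrite eq_sym -CrealE.
  have lt' : `|q'^*| < c^-1 by rewrite norm_conjC.
  have := le_lt_trans (@key _ _ _ pq rq' rb (neq _ lt) (neq _ lt') ab) (bound _ _ lt lt').
  by rewrite ltxx.
move=> a b ra rb _ _ la lb; apply/eqP/negPn/negP => ab.
have := le_lt_trans (@key _ _ _ pq ra rb (neq _ la) (neq _ lb) ab) (bound _ _ la lb).
by rewrite ltxx.
Qed.
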